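(* Let $f_w\ge1$ and $q_w\ge 2f_w+1$ be integers and let $g_1,\dots,g_{h_w}\in\mathbb{R}^d$ (correct gradients). For each $j\in\{1,\dots,m\}$ let $(y^{(j)}_1,\dots,y^{(j)}_{q_w})$ be a list of vectors of $\mathbb{R}^d$ of which at least $q_w-f_w$ entries belong to $\{g_1,\dots,g_{h_w}\}$ (the others arbitrary), and let $G_j=\mathrm{MDA}_{f_w}(y^{(j)}_1,\dots,y^{(j)}_{q_w})$. Then for each $j$ there exists $r^*(j)$ with $\|G_j-g_{r^*(j)}\|_2\le D$, where $D=\max_{r,s}\|g_r-g_s\|_2$, and consequently $$\max_{j,k\in\{1,\dots,m\}}\|G_j-G_k\|_2\le 3\max_{r,s\in\{1,\dots,h_w\}}\|g_r-g_s\|_2 .$$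
   Context: Minimum–Diameter Averaging: for integers $f\ge 0$, $q\ge 2f+1$ and vectors $x_1,\dots,x_q\in\mathbb{R}^d$, $\mathrm{MDA}_f(x_1,\dots,x_q)$ is defined as follows: among all index sets $I\subset\{1,\dots,q\}$ with $|I|=q-f$, choose one, $I^*$, minimizing $\max_{i,j\in I}\|x_i-x_j\|_2$ (ties broken arbitrarily); then $\mathrm{MDA}_f(x_1,\dots,x_q)=\frac{1}{q-f}\sum_{i\in I^*}x_i$. *)

(* Defs.v *)
(* R is an arbitrary real closed field (needed for sqrt);
   vectors of R^d are row vectors 'rV[R]_d. *)
From HB Require Import structures.
From mathcomp Require Import all_boot all_order all_algebra.
Set Implicit Arguments. Unset Strict Implicit. Unset Printing Implicit Defensive.
Import Order.TTheory GRing.Theory Num.Theory.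
Local Open Scope ring_scope.

Definition vnorm (R : rcfType) (d : nat) (v : 'rV[R]_d) : R :=
  Num.sqrt (\sum_(i < d) (v 0 i) ^+ 2).

(* diameter of the family (x_i)_{i in I}: max_{i,k in I} ||x_i - x_k|| (0 if I empty) *)
Definition diam (R : rcfType) (d : nat) (T : finType) (x : T -> 'rV[R]_d)
  (I : {set T}) : R :=
  \big[Num.max/0]_(i in I) \big[Num.max/0]_(k in I) vnorm (x i - x k).

(* I is an admissible choice of the index set I* in MDA_f(x_1..x_q):
   |I| = q - f and I minimizes the diameter among all such sets
   (any such minimizer may be chosen: ties broken arbitrarily). *)
Definition is_MDA_set (R : rcfType) (d q f : nat) (x : 'I_q -> 'rV[R]_d)
  (I : {set 'I_q}) : Prop :=
  #|I| = (q - f)%N /\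
  forall J : {set 'I_q}, #|J| = (q - f)%N -> diam x I <= diam x J.

Definition mda_avg (R : rcfType) (d q f : nat) (x : 'I_q -> 'rV[R]_d)
  (I : {set 'I_q}) : 'rV[R]_d :=
  ((q - f)%:R)^-1 *: \sum_(i in I) x i.

(* Main.v *)
Require Import Defs.
From HB Require Import structures.
From mathcomp Require Import all_boot all_order all_algebra.
From mathcomp Require Import ring lra zify.
Import Order.TTheory GRing.Theory Num.Theory.
Local Open Scope ring_scope.

Section Norm.
Variables (R : rcfType) (d : nat).
Implicit Types u v : 'rV[R]_d.

Definition nsq v := \sum_(i < d) (v 0 i) ^+ 2.
Definition dotp u v := \sum_(i < d) (u 0 i * v 0 i).

Lemma nsq_ge0 v : 0 <= nsq v.
Proof. by apply: sumr_ge0 => i _; rewrite sqr_ge0. Qed.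

Lemma cauchy_schwarz u v : dotp u v ^+ 2 <= nsq u * nsq v.
Proof.
set a := fun i => u 0 i; set b := fun i => v 0 i.
have H : 0 <= \sum_(i < d) \sum_(j < d) (a i * b j - a j * b i) ^+ 2.
  by apply: sumr_ge0 => i _; apply: sumr_ge0 => j _; rewrite sqr_ge0.
have E : \sum_(i < d) \sum_(j < d) (a i * b j - a j * b i) ^+ 2 =
   2 * (nsq u * nsq v) - 2 * dotp u v ^+ 2.
  have -> : \sum_(i < d) \sum_(j < d) (a i * b j - a j * b i) ^+ 2 =
     \sum_(i < d) \sum_(j < d) (a i ^+ 2 * b j ^+ 2) +
     \sum_(i < d) \sum_(j < d) (a j ^+ 2 * b i ^+ 2) -
     2 * \sum_(i < d) \sum_(j < d) ((a i * b i) * (a j * b j)).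
    rewrite mulr_sumr -big_split -sumrB /=; apply: eq_bigr => i _.
    rewrite mulr_sumr -big_split -sumrB /=; apply: eq_bigr => j _.
    ring.
  rewrite [X in _ + X - _]exchange_big /=.
  have -> : \sum_(i < d) \sum_(j < d) (a i ^+ 2 * b j ^+ 2) = nsq u * nsq v.
    rewrite /nsq big_distrl /=; apply: eq_bigr => i _.
    by rewrite big_distrr.
  have -> : \sum_(i < d) \sum_(j < d) ((a i * b i) * (a j * b j)) = dotp u v ^+ 2.
    rewrite /dotp expr2 big_distrl /=; apply: eq_bigr => i _.
    by rewrite big_distrr.
  ring.
rewrite E in H; lra.
Qed.

Lemma dotp_le u v : dotp u v <= vnorm u * vnorm v.
Proof.
rewrite /vnorm -sqrtrM ?nsq_ge0 //.
apply: (le_trans (ler_norm _)).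
rewrite -sqrtr_sqr ler_wsqrtr //; exact: cauchy_schwarz.
Qed.

Lemma nsqD u v : nsq (u + v) = nsq u + nsq v + 2 * dotp u v.
Proof.
rewrite /nsq /dotp mulr_sumr -!big_split /=; apply: eq_bigr => i _.
rewrite !mxE; ring.
Qed.

Lemma vnorm_ge0 v : 0 <= vnorm v.
Proof. exact: sqrtr_ge0. Qed.

Lemma vnorm_sq v : vnorm v ^+ 2 = nsq v.
Proof. by rewrite /vnorm sqr_sqrtr // nsq_ge0. Qed.

Lemma vnormD u v : vnorm (u + v) <= vnorm u + vnorm v.
Proof.
have h0 := vnorm_ge0 u; have h1 := vnorm_ge0 v.
rewrite -[vnorm u + vnorm v]ger0_norm ?addr_ge0 // -sqrtr_sqr.
rewrite {1}/vnorm ler_wsqrtr // -/(nsq _) nsqD -!vnorm_sq.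
have := dotp_le u v; nra.
Qed.

Lemma vnormZ c v : vnorm (c *: v) = `|c| * vnorm v.
Proof.
rewrite /vnorm -sqrtr_sqr -sqrtrM ?sqr_ge0 //; congr Num.sqrt.
rewrite mulr_sumr; apply: eq_bigr => i _; rewrite !mxE; ring.
Qed.

Lemma vnormN v : vnorm (- v) = vnorm v.
Proof. by rewrite -scaleN1r vnormZ normrN normr1 mul1r. Qed.

Lemma vnormB u v : vnorm (u - v) = vnorm (v - u).
Proof. by rewrite -vnormN opprB. Qed.

Lemma vnorm0 : vnorm (0 : 'rV[R]_d) = 0.
Proof.
rewrite /vnorm big1 ?sqrtr0 // => i _; rewrite mxE; ring.
Qed.

Lemma vnorm_sum (T : finType) (A : {set T}) (F : T -> 'rV[R]_d) :
  vnorm (\sum_(i in A) F i) <= \sum_(i in A) vnorm (F i).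
Proof.
elim/big_rec2: _ => [|i y1 y2 _ H]; first by rewrite vnorm0.
apply: (le_trans (vnormD _ _)); by rewrite lerD2l.
Qed.

End Norm.

Lemma exists_subset_card (T : finType) (A : {set T}) (n : nat) :
  (n <= #|A|)%N -> exists B : {set T}, B \subset A /\ #|B| = n.
Proof.
elim: n => [|n IH] hn; first by exists set0; rewrite sub0set cards0.
have [B [sBA cB]] := IH (ltnW hn).
have : (0 < #|A :\: B|)%N.
  rewrite cardsD; move/setIidPr: sBA => ->; lia.
rewrite card_gt0 => /set0Pn [x]; rewrite in_setD => /andP [xB xA].
exists (x |: B); split; first by rewrite subUset sub1set xA.
by rewrite cardsU1 xB cB.
Qed.

Lemma max0_ge0 (R : rcfType) (T : finType) (P : pred T) (F : T -> R) :
  0 <= \big[Num.max/0]_(i | P i) F i.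
Proof. exact: bigmax_ge_id. Qed.

Lemma part1 (R : rcfType) (d fw qw hw : nat) (g : 'I_hw -> 'rV[R]_d)
  (y : 'I_qw -> 'rV[R]_d) (I : {set 'I_qw}) :
  (2 * fw + 1 <= qw)%N ->
  (qw - fw <= #|[set i : 'I_qw | [exists r : 'I_hw, y i == g r]]|)%N ->
  is_MDA_set fw y I ->
  exists r : 'I_hw, vnorm (mda_avg fw y I - g r) <=
     \big[Num.max/0]_(r < hw) \big[Num.max/0]_(s < hw) vnorm (g r - g s).
Proof.
move=> hq hH [cI minI].
set Hs := [set i : 'I_qw | [exists r : 'I_hw, y i == g r]] in hH.
set D := \big[Num.max/0]_(r < hw) \big[Num.max/0]_(s < hw) vnorm (g r - g s).
have D0 : 0 <= D by exact: max0_ge0.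
have hD : forall r s, vnorm (g r - g s) <= D.
  move=> r s; apply: (bigmax_sup r) => //.
  exact: (bigmax_sup s).
have [J [sJ cJ]] := @exists_subset_card _ _ _ hH.
have dJ : diam y J <= D.
  apply: bigmax_le => // i iJ; apply: bigmax_le => // k kJ.
  move: (subsetP sJ _ iJ) (subsetP sJ _ kJ); rewrite !inE.
  by move=> /existsP [r /eqP ->] /existsP [s /eqP ->].
have dI : diam y I <= D := le_trans (minI _ cJ) dJ.
have : (0 < #|I :&: Hs|)%N.
  have := cardsUI I Hs; have := subset_leq_card (subsetT (I :|: Hs)); rewrite cardsT card_ord; move: cI hH hq; clearbody Hs.
  set x1 := #|I|; set x2 := #|Hs|; set x3 := #|I :|: Hs|; set x4 := #|I :&: Hs|.
  clearbody x1 x2 x3 x4; lia.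
rewrite card_gt0 => /set0Pn [i0]; rewrite in_setI => /andP [i0I].
rewrite inE => /existsP [r /eqP yi0].
exists r; apply: (le_trans _ dI).
set n := (qw - fw)%N.
have n0 : n%:R != 0 :> R by rewrite pnatr_eq0; lia.
have E : mda_avg fw y I - g r = (n%:R)^-1 *: \sum_(i in I) (y i - y i0).
  rewrite /mda_avg sumrB sumr_const cI -/n -scaler_nat scalerBr scalerA.
  by rewrite mulVf // scale1r yi0.
rewrite E vnormZ ger0_norm ?invr_ge0 ?ler0n //.
apply: (le_trans (ler_wpM2l _ (@vnorm_sum _ _ _ I _))); first by rewrite invr_ge0 ler0n.
have hs : \sum_(i in I) vnorm (y i - y i0) <= \sum_(i in I) diam y I.
  apply: ler_sum => i iI; apply: (bigmax_sup i) => //.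
  exact: (bigmax_sup i0).
apply: (le_trans (ler_wpM2l _ hs)); first by rewrite invr_ge0 ler0n.
rewrite sumr_const cI -/n.
by rewrite -[diam y I *+ n]mulr_natr mulrCA mulVf // mulr1.
Qed.

Theorem mainTheorem8 (R : rcfType) (d fw qw hw m : nat)
  (g : 'I_hw -> 'rV[R]_d)
  (y : 'I_m -> 'I_qw -> 'rV[R]_d)
  (I : 'I_m -> {set 'I_qw}) :
  (1 <= fw)%N ->
  (2 * fw + 1 <= qw)%N ->
  (forall j : 'I_m,
      (qw - fw <= #|[set i : 'I_qw | [exists r : 'I_hw, y j i == g r]]|)%N) ->
  (forall j : 'I_m, is_MDA_set fw (y j) (I j)) ->
  let G := fun j : 'I_m => mda_avg fw (y j) (I j) in
  let D := \big[Num.max/0]_(r < hw) \big[Num.max/0]_(s < hw) vnorm (g r - g s) in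
  (forall j : 'I_m, exists r : 'I_hw, vnorm (G j - g r) <= D) /\
  \big[Num.max/0]_(j < m) \big[Num.max/0]_(k < m) vnorm (G j - G k) <= 3 * D.
Proof.
move=> _ hq hH hI G D.
have P1 : forall j : 'I_m, exists r : 'I_hw, vnorm (G j - g r) <= D.
  by move=> j; exact: (@part1 R d fw qw hw g (y j) (I j) hq (hH j) (hI j)).
split => //.
have D0 : 0 <= D by exact: max0_ge0.
have hD : forall r s, vnorm (g r - g s) <= D.
  move=> r s; apply: (bigmax_sup r) => //.
  exact: (bigmax_sup s).
apply: bigmax_le => [|j _]; first by rewrite mulr_ge0.
apply: bigmax_le => [|k _]; first by rewrite mulr_ge0.
have [r hr] := P1 j; have [s hs] := P1 k.
have -> : G j - G k = (G j - g r) + ((g r - g s) + (g s - G k)) by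
  rewrite !addrA subrK subrK.
apply: (le_trans (@vnormD _ _ _ _)).
apply: (le_trans (lerD (le_refl _) (@vnormD _ _ _ _))).
rewrite (@vnormB _ _ (g s)).
have := hD r s; lra.
Qed.
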